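(* There exists a pair of orientation preserving isometries $A,B$ of $\mathbb{H}^4$ which is linked by half-turns and such that there is neither a point, a line, a plane nor a hyperplane of $\mathbb{H}^4$ invariant under both $A$ and $B$.
   Context: A plane is a $2$-dimensional totally geodesic subspace of $\mathbb{H}^4$. For a plane $P$, the half-turn $H_P$ is the composition of reflections in two orthogonal hyperplanes intersecting in $P$. A pair $A,B$ is linked by half-turns if there are planes $\alpha,\beta,\delta$ with $A=H_\alpha H_\beta$ and $B=H_\beta H_\delta$. *)

(* Defs.v *)
(* Hyperboloid model of H^4 inside Minkowski space R^{1,4}. *)
From HB Require Import structures.
From mathcomp Require Import all_boot all_order all_algebra.
From mathcomp Require Import reals.
Set Implicit Arguments. Unset Strict Implicit. Unset Printing Implicit Defensive.
Import Order.TTheory GRing.Theory Num.Theory.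
Local Open Scope ring_scope.

Section Hyp.
Variable R : realType.

Definition lorJ : 'M[R]_5 := diag_mx (\row_(i < 5) (if i == ord0 then -1 else 1)).

Definition mink (u v : 'cV[R]_5) : R := (u^T *m lorJ *m v) ord0 ord0.

Definition inH4 (x : 'cV[R]_5) : Prop := mink x x = -1 /\ 0 < x ord0 ord0.

(* Orientation preserving isometries of H^4 = SO^+(1,4), acting by x |-> M x. *)
Definition isom_or (M : 'M[R]_5) : Prop :=
  M^T *m lorJ *m M = lorJ /\ 0 < M ord0 ord0 /\ \det M = 1.

(* Totally geodesic k-dimensional subspace of H^4: nonempty intersection of H^4
   with a (k+1)-dimensional linear subspace (row space of V) of R^{1,4}. *)
Definition tg_subspace (k : nat) (S : 'cV[R]_5 -> Prop) : Prop :=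
  exists V : 'M[R]_5, \rank V = k.+1 /\ (exists x, S x) /\
    forall x, S x <-> (inH4 x /\ (x^T <= V)%MS).

Definition is_plane := tg_subspace 2.

(* Reflection in the hyperplane H^4 ∩ n^⊥ (n spacelike). *)
Definition refl (n : 'cV[R]_5) : 'M[R]_5 :=
  1%:M - (2 / mink n n) *: (n *m (n^T *m lorJ)).

Definition halfturn (P : 'cV[R]_5 -> Prop) (H : 'M[R]_5) : Prop :=
  exists n1 n2 : 'cV[R]_5,
    0 < mink n1 n1 /\ 0 < mink n2 n2 /\ mink n1 n2 = 0 /\
    (forall x, P x <-> (inH4 x /\ mink n1 x = 0 /\ mink n2 x = 0)) /\
    H = refl n1 *m refl n2.

Definition linked (A B : 'M[R]_5) : Prop :=
  exists (al be de : 'cV[R]_5 -> Prop) (Ha Hb Hd : 'M[R]_5),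
    is_plane al /\ is_plane be /\ is_plane de /\
    halfturn al Ha /\ halfturn be Hb /\ halfturn de Hd /\
    A = Ha *m Hb /\ B = Hb *m Hd.

Definition inv_set (M : 'M[R]_5) (S : 'cV[R]_5 -> Prop) : Prop :=
  forall y, S y <-> exists x, S x /\ M *m x = y.

End Hyp.

(* Main.v *)
Require Import Defs.
From HB Require Import structures.
From mathcomp Require Import all_boot all_order all_algebra.
From mathcomp Require Import reals ring.
Set Implicit Arguments. Unset Strict Implicit. Unset Printing Implicit Defensive.
Import Order.TTheory GRing.Theory Num.Theory.
Local Open Scope ring_scope.

Section Num.
Variable R : realType.
Definition mk (l : seq (seq R)) : 'M[R]_5 := \matrix_(i, j) nth 0 (nth [::] l i) j.
Definition mkc (l : seq R) : 'cV[R]_5 := \col_i nth 0 l i.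
Definition mkr (l : seq R) : 'rV[R]_5 := \row_i nth 0 l i.
Definition o0 : 'I_5 := @Ordinal 5 0 isT.
Definition o1 : 'I_5 := @Ordinal 5 1 isT.
Definition o2 : 'I_5 := @Ordinal 5 2 isT.
Definition o3 : 'I_5 := @Ordinal 5 3 isT.
Definition o4 : 'I_5 := @Ordinal 5 4 isT.
Lemma sum5 (F : 'I_5 -> R) : \sum_(i < 5) F i = F o0 + F o1 + F o2 + F o3 + F o4.
Proof.
rewrite !big_ord_recl big_ord0 addr0 /= !addrA. congr (_ + _ + _ + _ + _); congr F; exact: val_inj.
Qed.
Lemma mulE m (A : 'M[R]_(m,5)) n (B : 'M[R]_(5,n)) i j :
  (A *m B) i j = A i o0 * B o0 j + A i o1 * B o1 j + A i o2 * B o2 j + A i o3 * B o3 j + A i o4 * B o4 j.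
Proof. by rewrite mxE sum5. Qed.
Ltac outr := exfalso; match goal with H : is_true (_ < _)%N |- _ => move: H; rewrite !ltnS; done end.
Ltac mxcase := apply/matrixP;
  case=> [[|[|[|[|[|?]]]]] ?]; try (by outr);
  case=> [[|[|[|[|[|?]]]]] ?]; try (by outr).
Ltac mxcaseC := apply/matrixP;
  case=> [[|[|[|[|[|?]]]]] ?]; try (by outr);
  case=> [[|?] ?]; try (by outr).
Ltac mxcaseR := apply/matrixP;
  case=> [[|?] ?]; try (by outr);
  case=> [[|[|[|[|[|?]]]]] ?]; try (by outr).
Ltac ev := do 4 rewrite ?mxE ?sum5 ?big_ord1; rewrite /=; ring.
Definition nv := mkc [:: 0;0;1;0;0].
Definition ev := mkc [:: 0;0;0;1;0].
Definition mv := mkc [:: 1;1;1;0;0].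
Definition pv := mkc [:: 0;1;0;1;0].
Definition qv := mkc [:: 0;0;1;0;1].
Definition pa := mkc [:: 1;0;0;0;0].
Definition pb := mkc [:: 2;1;1;0;1].
Definition u0 := mkc [:: 1;1;0;0;0].
Definition u1 := mkc [:: 3;2;2;1;0].
Definition u2 := mkc [:: 11;7;8;2;-2].
Definition u3 := mkc [:: 33;20;24;7;-8].
Definition u4 := mkc [:: 97;57;72;20;-24].
Definition v0 := mkr [:: 4;-4;0;0;0].
Definition v1 := mkr [:: 4;0;0;4;0].
Definition v2 := mkr [:: 12;4;0;8;8].
Definition v3 := mkr [:: 44;8;-8;28;32].
Definition v4 := mkr [:: 132;28;-32;80;96].
Definition Rn := mk [:: [:: 1;0;0;0;0]; [:: 0;1;0;0;0]; [:: 0;0;-1;0;0]; [:: 0;0;0;1;0]; [:: 0;0;0;0;1]].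
Definition Re := mk [:: [:: 1;0;0;0;0]; [:: 0;1;0;0;0]; [:: 0;0;1;0;0]; [:: 0;0;0;-1;0]; [:: 0;0;0;0;1]].
Definition Rm := mk [:: [:: 3;-2;-2;0;0]; [:: 2;-1;-2;0;0]; [:: 2;-2;-1;0;0]; [:: 0;0;0;1;0]; [:: 0;0;0;0;1]].
Definition Rp := mk [:: [:: 1;0;0;0;0]; [:: 0;0;0;-1;0]; [:: 0;0;1;0;0]; [:: 0;-1;0;0;0]; [:: 0;0;0;0;1]].
Definition Rq := mk [:: [:: 1;0;0;0;0]; [:: 0;1;0;0;0]; [:: 0;0;0;0;-1]; [:: 0;0;0;1;0]; [:: 0;0;-1;0;0]].
Definition Ham := mk [:: [:: 1;0;0;0;0]; [:: 0;1;0;0;0]; [:: 0;0;-1;0;0]; [:: 0;0;0;-1;0]; [:: 0;0;0;0;1]].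
Definition Hbm := mk [:: [:: 3;-2;-2;0;0]; [:: 2;-1;-2;0;0]; [:: 2;-2;-1;0;0]; [:: 0;0;0;-1;0]; [:: 0;0;0;0;1]].
Definition Hdm := mk [:: [:: 1;0;0;0;0]; [:: 0;0;0;-1;0]; [:: 0;0;0;0;-1]; [:: 0;-1;0;0;0]; [:: 0;0;-1;0;0]].
Definition Am := mk [:: [:: 3;-2;-2;0;0]; [:: 2;-1;-2;0;0]; [:: -2;2;1;0;0]; [:: 0;0;0;1;0]; [:: 0;0;0;0;1]].
Definition Bm := mk [:: [:: 3;0;0;2;2]; [:: 2;0;0;1;2]; [:: 2;0;0;2;1]; [:: 0;1;0;0;0]; [:: 0;0;-1;0;0]].
Definition AJ := mk [:: [:: -3;2;-2;0;0]; [:: 2;-1;2;0;0]; [:: 2;-2;1;0;0]; [:: 0;0;0;1;0]; [:: 0;0;0;0;1]].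
Definition BJ := mk [:: [:: -3;2;2;0;0]; [:: 0;0;0;1;0]; [:: 0;0;0;0;-1]; [:: -2;1;2;0;0]; [:: -2;2;1;0;0]].
Definition A2 := mk [:: [:: 9;-8;-4;0;0]; [:: 8;-7;-4;0;0]; [:: -4;4;1;0;0]; [:: 0;0;0;1;0]; [:: 0;0;0;0;1]].
Definition Gm := mk [:: [:: 1;1;0;0;0]; [:: 3;2;2;1;0]; [:: 11;7;8;2;-2]; [:: 33;20;24;7;-8]; [:: 97;57;72;20;-24]].
Definition Nm := mk [:: [:: 4;-4;0;0;0]; [:: 4;0;0;4;0]; [:: 12;4;0;8;8]; [:: 44;8;-8;28;32]; [:: 132;28;-32;80;96]].
Definition K4 := mk [:: [:: 9;4;-4;-8;3]; [:: -5;-4;4;8;-3]; [:: -7;-2;4;2;-1]; [:: -3;4;-4;4;-1]; [:: 1;4;2;-4;1]].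
Definition K16 := mk [:: [:: 3;0;4;-4;1]; [:: -1;0;4;-4;1]; [:: 1;-2;4;2;-1]; [:: -3;4;-4;4;-1]; [:: -1;-4;-2;4;-1]].
Definition I4 := mk [:: [:: 4;0;0;0;0]; [:: 0;4;0;0;0]; [:: 0;0;4;0;0]; [:: 0;0;0;4;0]; [:: 0;0;0;0;4]].
Definition I16 := mk [:: [:: 16;0;0;0;0]; [:: 0;16;0;0;0]; [:: 0;0;16;0;0]; [:: 0;0;0;16;0]; [:: 0;0;0;0;16]].
Definition Pm := mk [:: [:: 4;-4;0;0;0]; [:: 4;-4;0;0;0]; [:: 0;0;0;0;0]; [:: 0;0;0;0;0]; [:: 0;0;0;0;0]].
Definition AmT := mk [:: [:: 3;2;-2;0;0]; [:: -2;-1;2;0;0]; [:: -2;-2;1;0;0]; [:: 0;0;0;1;0]; [:: 0;0;0;0;1]].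
Definition BmT := mk [:: [:: 3;2;2;0;0]; [:: 0;0;0;1;0]; [:: 0;0;0;0;-1]; [:: 2;1;2;0;0]; [:: 2;2;1;0;0]].
Definition Jn := mk [:: [:: -1;0;0;0;0]; [:: 0;1;0;0;0]; [:: 0;0;1;0;0]; [:: 0;0;0;1;0]; [:: 0;0;0;0;1]].
Definition In := mk [:: [:: 1;0;0;0;0]; [:: 0;1;0;0;0]; [:: 0;0;1;0;0]; [:: 0;0;0;1;0]; [:: 0;0;0;0;1]].
Lemma lorJE : lorJ R = Jn.
Proof. rewrite /lorJ /Jn; mxcase; rewrite !mxE /=; reflexivity. Qed.
Lemma idE : (1%:M : 'M[R]_5) = In.
Proof. rewrite /In; mxcase; rewrite !mxE /=; reflexivity. Qed.
Lemma minkE (u w : 'cV[R]_5) : mink u w =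
  - (u o0 0 * w o0 0) + u o1 0 * w o1 0 + u o2 0 * w o2 0 + u o3 0 * w o3 0 + u o4 0 * w o4 0.
Proof. rewrite /mink lorJE /Jn. ev. Qed.
Definition nth2 (a : seq (seq R)) i j := nth 0 (nth [::] a i) j.
Definition lsum (a b : seq (seq R)) i j :=
  nth2 a i 0 * nth2 b 0 j + nth2 a i 1 * nth2 b 1 j + nth2 a i 2 * nth2 b 2 j
  + nth2 a i 3 * nth2 b 3 j + nth2 a i 4 * nth2 b 4 j.
Lemma mulmk a b c : (forall i j : nat, (i < 5)%N -> (j < 5)%N -> lsum a b i j = nth2 c i j) ->
  mk a *m mk b = mk c.
Proof. move=> H; apply/matrixP => i j; rewrite mulE !mxE; exact: H. Qed.
Definition lsumc (a : seq (seq R)) (b : seq R) i :=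
  nth2 a i 0 * nth 0 b 0 + nth2 a i 1 * nth 0 b 1 + nth2 a i 2 * nth 0 b 2
  + nth2 a i 3 * nth 0 b 3 + nth2 a i 4 * nth 0 b 4.
Lemma mulmkc a b c : (forall i : nat, (i < 5)%N -> lsumc a b i = nth 0 c i) ->
  mk a *m mkc b = mkc c.
Proof. move=> H; apply/matrixP => i j; rewrite mulE !mxE; exact: H. Qed.
Definition lsumr (b : seq R) (a : seq (seq R)) j :=
  nth 0 b 0 * nth2 a 0 j + nth 0 b 1 * nth2 a 1 j + nth 0 b 2 * nth2 a 2 j
  + nth 0 b 3 * nth2 a 3 j + nth 0 b 4 * nth2 a 4 j.
Lemma mulmkr a b c : (forall j : nat, (j < 5)%N -> lsumr b a j = nth 0 c j) ->
  mkr b *m mk a = mkr c.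
Proof. move=> H; apply/matrixP => i j; rewrite mulE !mxE; exact: H. Qed.
Ltac cases2 := let i := fresh "i" in let j := fresh "j" in intros i j; do 5 (try destruct i as [|i]); try (by []); do 5 (try destruct j as [|j]); try (by []); intros _ _; rewrite /lsum /nth2 /=; ring.
Ltac cases1 := let i := fresh "i" in intros i; do 5 (try destruct i as [|i]); try (by []); intros _; rewrite /lsumc /lsumr /nth2 /=; ring.


Lemma mink_ (a b : seq R) : mink (mkc a) (mkc b) =
  - (nth 0 a 0 * nth 0 b 0) + nth 0 a 1 * nth 0 b 1 + nth 0 a 2 * nth 0 b 2 + nth 0 a 3 * nth 0 b 3 + nth 0 a 4 * nth 0 b 4.
Proof. by rewrite minkE !mxE. Qed.
Ltac mk_num := rewrite mink_ /=; ring.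
Lemma m_nn : mink nv nv = 1. Proof. rewrite /nv; mk_num. Qed.
Lemma m_ee : mink ev ev = 1. Proof. rewrite /ev; mk_num. Qed.
Lemma m_mm : mink mv mv = 1. Proof. rewrite /mv; mk_num. Qed.
Lemma m_pp : mink pv pv = 2. Proof. rewrite /pv; mk_num. Qed.
Lemma m_qq : mink qv qv = 2. Proof. rewrite /qv; mk_num. Qed.
Lemma m_ne : mink nv ev = 0. Proof. rewrite /nv /ev; mk_num. Qed.
Lemma m_me : mink mv ev = 0. Proof. rewrite /mv /ev; mk_num. Qed.
Lemma m_pq : mink pv qv = 0. Proof. rewrite /pv /qv; mk_num. Qed.
Lemma m_na : mink nv pa = 0. Proof. rewrite /nv /pa; mk_num. Qed.
Lemma m_ea : mink ev pa = 0. Proof. rewrite /ev /pa; mk_num. Qed.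
Lemma m_pa : mink pv pa = 0. Proof. rewrite /pv /pa; mk_num. Qed.
Lemma m_qa : mink qv pa = 0. Proof. rewrite /qv /pa; mk_num. Qed.
Lemma m_mb : mink mv pb = 0. Proof. rewrite /mv /pb; mk_num. Qed.
Lemma m_eb : mink ev pb = 0. Proof. rewrite /ev /pb; mk_num. Qed.
Lemma H4a : inH4 pa.
Proof. split; first by rewrite /pa; mk_num. by rewrite /pa mxE /= ltr01. Qed.
Lemma H4b : inH4 pb.
Proof. split; first by rewrite /pb; mk_num. by rewrite /pb mxE /= ltr0n. Qed.

Lemma two_div2 : (2 : R) / 2 = 1.
Proof. by rewrite divff // pnatr_eq0. Qed.
Ltac refl_num m := rewrite /refl m ?divr1 ?two_div2 lorJE idE; unfold nv, ev, mv, pv, qv, Rn, Re, Rm, Rp, Rq, Jn, In; mxcase; ev.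
Lemma r_n : refl nv = Rn. Proof. refl_num m_nn. Qed.
Lemma r_e : refl ev = Re. Proof. refl_num m_ee. Qed.
Lemma r_m : refl mv = Rm. Proof. refl_num m_mm. Qed.
Lemma r_p : refl pv = Rp. Proof. refl_num m_pp. Qed.
Lemma r_q : refl qv = Rq. Proof. refl_num m_qq. Qed.

Lemma p_Ha : Rn *m Re = Ham. Proof. apply: mulmk; cases2. Qed.
Lemma p_Hb : Rm *m Re = Hbm. Proof. apply: mulmk; cases2. Qed.
Lemma p_Hd : Rp *m Rq = Hdm. Proof. apply: mulmk; cases2. Qed.
Lemma p_A : Ham *m Hbm = Am. Proof. apply: mulmk; cases2. Qed.
Lemma p_B : Hbm *m Hdm = Bm. Proof. apply: mulmk; cases2. Qed.
Lemma t_A : Am^T = AmT. Proof. rewrite /Am /AmT; mxcase; rewrite !mxE /=; reflexivity. Qed.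
Lemma t_B : Bm^T = BmT. Proof. rewrite /Bm /BmT; mxcase; rewrite !mxE /=; reflexivity. Qed.
Lemma p_AJ : AmT *m Jn = AJ. Proof. apply: mulmk; cases2. Qed.
Lemma p_BJ : BmT *m Jn = BJ. Proof. apply: mulmk; cases2. Qed.
Lemma p_AJA : AJ *m Am = Jn. Proof. apply: mulmk; cases2. Qed.
Lemma p_BJB : BJ *m Bm = Jn. Proof. apply: mulmk; cases2. Qed.
Lemma p_A2 : Am *m Am = A2. Proof. apply: mulmk; cases2. Qed.
Lemma p_P : A2 - 2 *: Am + In = u0 *m v0.
Proof. rewrite /A2 /Am /In /u0 /v0; mxcase; rewrite !mxE ?big_ord1 !mxE /=; ring. Qed.
Lemma bu0 : Bm *m u0 = u1. Proof. apply: mulmkc; cases1. Qed.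
Lemma bu1 : Bm *m u1 = u2. Proof. apply: mulmkc; cases1. Qed.
Lemma bu2 : Bm *m u2 = u3. Proof. apply: mulmkc; cases1. Qed.
Lemma bu3 : Bm *m u3 = u4. Proof. apply: mulmkc; cases1. Qed.
Lemma vb0 : v0 *m Bm = v1. Proof. apply: mulmkr; cases1. Qed.
Lemma vb1 : v1 *m Bm = v2. Proof. apply: mulmkr; cases1. Qed.
Lemma vb2 : v2 *m Bm = v3. Proof. apply: mulmkr; cases1. Qed.
Lemma vb3 : v3 *m Bm = v4. Proof. apply: mulmkr; cases1. Qed.
Lemma p_KG : K4 *m Gm = I4. Proof. apply: mulmk; cases2. Qed.
Lemma p_KN : K16 *m Nm = I16. Proof. apply: mulmk; cases2. Qed.
Lemma I4E : I4 = 4%:M. Proof. rewrite /I4; mxcase; rewrite !mxE /=; reflexivity. Qed.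
Lemma I16E : I16 = 16%:M. Proof. rewrite /I16; mxcase; rewrite !mxE /=; reflexivity. Qed.
End Num.



Section Gen.
Variable R : realType.

Lemma det_1sub n (u : 'cV[R]_n) (w : 'rV[R]_n) :
  \det (1%:M - u *m w) = 1 - (w *m u) 0 0.
Proof.
pose M := block_mx (1%:M : 'M[R]_n) u w (1%:M : 'M[R]_1).
have E1 : M = block_mx 1%:M 0 w 1%:M *m block_mx 1%:M u 0 (1%:M - w *m u).
  rewrite mulmx_block ?mul1mx ?mulmx1 ?mul0mx ?mulmx0 ?addr0 ?add0r.
  by rewrite addrCA subrr addr0.
have E2 : M = block_mx (1%:M - u *m w) u 0 1%:M *m block_mx 1%:M 0 w 1%:M.
  rewrite mulmx_block ?mul1mx ?mulmx1 ?mul0mx ?mulmx0 ?addr0 ?add0r.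
  by rewrite subrK.
have := congr1 determinant E1; rewrite {1}E2 !det_mulmx.
rewrite (det_lblock (1%:M : 'M[R]_n) w). rewrite det_ublock det_ublock !det1 !mul1r !mulr1 det_mx11.
by rewrite !mxE eqxx mulr1n => ->.
Qed.

Lemma minkM (u w : 'cV[R]_5) : u^T *m (lorJ R *m w) = (mink u w)%:M.
Proof. by apply/matrixP=> i j; rewrite !ord1 [RHS]mxE eqxx mulr1n /mink mulmxA. Qed.

Lemma det_refl (n : 'cV[R]_5) : mink n n != 0 -> \det (refl n) = -1.
Proof.
move=> nz; rewrite /refl scalemxAl det_1sub -scalemxAr mxE -/(mink n n) divfK //.
ring.
Qed.
Lemma minkC (u w : 'cV[R]_5) : mink u w = mink w u.
Proof.
rewrite /mink.
have -> : (u^T *m lorJ R *m w) 0 0 = ((u^T *m lorJ R *m w)^T) 0 0 by rewrite [RHS]mxE.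
by rewrite !trmx_mul trmxK /lorJ tr_diag_mx mulmxA.
Qed.

Lemma sc0 (a : R) : a = 0 -> (a%:M : 'M[R]_1) == 0.
Proof. by move=> ->; apply/eqP/matrixP => i j; rewrite !mxE mul0rn. Qed.
Lemma sc0' (a : R) : (a%:M : 'M[R]_1) == 0 -> a = 0.
Proof. by move/eqP/matrixP/(_ 0 0); rewrite !mxE eqxx mulr1n. Qed.

Lemma plane_ok (n1 n2 p : 'cV[R]_5) : mink n1 n1 != 0 -> mink n2 n2 != 0 -> mink n1 n2 = 0 ->
  inH4 p -> mink n1 p = 0 -> mink n2 p = 0 ->
  is_plane (fun x => inH4 x /\ mink n1 x = 0 /\ mink n2 x = 0).
Proof.
move=> h1 h2 h12 Hp p1 p2.
pose N := row_mx (lorJ R *m n1) (lorJ R *m n2).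
exists (kermx N); split; [|split; [by exists p|]].
- rewrite mxrank_ker; suff -> : \rank N = 2%N by [].
  apply/eqP; rewrite eqn_leq rank_leq_col /=.
  pose L := col_mx ((mink n1 n1)^-1 *: n1^T) ((mink n2 n2)^-1 *: n2^T).
  have LN : L *m N = 1%:M.
    rewrite mul_col_row -!scalemxAl !minkM (scalar_mx_block 1 1 1).
    rewrite (minkC n2 n1) h12.
    congr block_mx; apply/matrixP => i j; rewrite !ord1 !mxE ?eqxx ?mulr1n ?mulr0n ?mulr0 ?mulVf //.
  by have := mxrankM_maxr L N; rewrite LN mxrank1.
- move=> x; split => [[Hx [e1 e2]]|[Hx Hk]]; split => //.
    rewrite sub_kermx mul_mx_row row_mx_eq0 !minkM.
    by rewrite (minkC x n1) (minkC x n2) e1 e2 !sc0.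
  move: Hk; rewrite sub_kermx mul_mx_row row_mx_eq0 !minkM => /andP[/sc0' e1 /sc0' e2].
  by rewrite (minkC n1 x) (minkC n2 x) e1 e2.
Qed.
End Gen.


Section Main.
Variable R : realType.

Lemma no_inv (A B : 'M[R]_5) (u : 'cV[R]_5) (v : 'rV[R]_5) (G N K1 K2 : 'M[R]_5) (c1 c2 : R) :
 A *m A - 2 *: A + 1%:M = u *m v ->
 (forall i : 'I_5, row i G = (B ^+ i *m u)^T) ->
 (forall i : 'I_5, row i N = v *m B ^+ i) ->
 K1 *m G = c1%:M -> c1 != 0 -> K2 *m N = c2%:M -> c2 != 0 ->
 forall k S, (k <= 3)%N -> tg_subspace k S -> ~ (inv_set A S /\ inv_set B S).
Proof.
move=> HP HG HN HK1 c1n HK2 c2n k S k3 [V [rV [[x0 Sx0] HS]]] [iA iB].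
have clA : forall y, S y -> S (A *m y).
  by move=> y Sy; apply/(iA (A *m y)); exists y.
have clB : forall y, S y -> S (B *m y).
  by move=> y Sy; apply/(iB (B *m y)); exists y.
have clBp : forall (i : nat) y, S y -> S (B ^+ i *m y).
  elim=> [|i IH] y Sy; first by rewrite expr0 mul1mx.
  by rewrite exprS -mulmxE -mulmxA; apply/clB/IH.
have WS : forall y, S y -> (y^T <= V)%MS by move=> y /HS [].
case: (pickP (fun i : 'I_5 => (N *m x0) i 0 != 0)) => [i Hi | H0].
- pose y := B ^+ i *m x0.
  have Sy : S y by apply: clBp.
  have Ey : (N *m x0) i 0 = (v *m y) 0 0.
    transitivity ((row i (N *m x0)) 0 0); first by rewrite [RHS]mxE.
    by rewrite row_mul HN /y mulmxA.
  set c := (v *m y) 0 0.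
  have cn : c != 0 by rewrite /c -Ey.
  have key : forall j : 'I_5, ((B ^+ j *m u)^T <= V)%MS.
    move=> j.
    have E : B ^+ j *m (A *m (A *m y)) + (- 2) *: (B ^+ j *m (A *m y)) + B ^+ j *m y
             = c *: (B ^+ j *m u).
      have cM : (c%:M : 'M[R]_1) = v *m y by rewrite /c -mx11_scalar.
      rewrite -[c *: _]mul_mx_scalar cM -mulmxA [u *m _]mulmxA -HP.
      rewrite !mulmxDl !mulmxDr mul1mx mulNmx mulmxN -!scalemxAl -!scalemxAr !mulmxA scaleNr.
      by [].
    have : ((c *: (B ^+ j *m u))^T <= V)%MS.
      rewrite -E !linearD !linearZ /=.
      apply: addmx_sub; [apply: addmx_sub; [|apply: scalemx_sub]|].
      + exact/WS/clBp/clA/clA.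
      + exact/WS/clBp/clA.
      + exact/WS/clBp.
    move/(scalemx_sub c^-1); rewrite linearZ /= scalerA mulVf // scale1r.
    by [].
  have GV : (G <= V)%MS by apply/row_subP => j; rewrite HG.
  have IV : (1%:M <= V)%MS.
    have : (c1^-1 *: (K1 *m G) <= V)%MS by apply/scalemx_sub/(submx_trans (submxMl _ _)).
    by rewrite HK1 scale_scalar_mx mulVf.
  have := mxrankS IV; rewrite mxrank1 rV.
  by rewrite ltnS => h; have := leq_trans h k3.
- have Nx : N *m x0 = 0.
    apply/matrixP => i j; rewrite ord1 [RHS]mxE.
    by apply/eqP; move: (H0 i) => /= /negbFE.
  have x00 : x0 = 0.
    have : c2^-1 *: (K2 *m N *m x0) = x0.
      by rewrite HK2 mul_scalar_mx scalerA mulVf // scale1r.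
    by rewrite -mulmxA Nx mulmx0 scaler0 => <-.
  case: ((HS x0).1 Sx0) => [[Hm _] _]; move: Hm.
  rewrite x00 /mink trmx0 !mul0mx mxE => /eqP.
  by rewrite eq_sym oppr_eq0 oner_eq0.
Qed.
End Main.


Theorem theorem8p1 (R : realType) :
  exists A B : 'M[R]_5,
    isom_or A /\ isom_or B /\ linked A B /\
    (forall (k : nat) (S : 'cV[R]_5 -> Prop),
        (k <= 3)%N -> tg_subspace k S -> ~ (inv_set A S /\ inv_set B S)).
Proof.
have n0 : forall a : R, a = 1 \/ a = 2 -> a != 0.
  by move=> a [] ->; rewrite ?oner_eq0 ?pnatr_eq0.
have p0 : forall a : R, a = 1 \/ a = 2 -> 0 < a.
  by move=> a [] ->; rewrite ?ltr01 ?ltr0n.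
have eA : Am R = refl (nv R) *m refl (ev R) *m (refl (mv R) *m refl (ev R)).
  by rewrite r_n r_e r_m p_Ha p_Hb p_A.
have eB : Bm R = refl (mv R) *m refl (ev R) *m (refl (pv R) *m refl (qv R)).
  by rewrite r_e r_m r_p r_q p_Hb p_Hd p_B.
exists (Am R), (Bm R); split; [|split; [|split]].
- split; first by rewrite t_A lorJE p_AJ p_AJA.
  split; first by rewrite /Am mxE /= ltr0n.
  rewrite eA !det_mulmx !det_refl; first (by rewrite !mulrNN !mulr1).
  all: rewrite ?m_nn ?m_ee ?m_mm ?oner_eq0 //.
- split; first by rewrite t_B lorJE p_BJ p_BJB.
  split; first by rewrite /Bm mxE /= ltr0n.
  rewrite eB !det_mulmx !det_refl; first (by rewrite !mulrNN !mulr1).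
  all: rewrite ?m_ee ?m_mm ?m_pp ?m_qq ?oner_eq0 ?pnatr_eq0 //.
- exists (fun x => inH4 x /\ mink (nv R) x = 0 /\ mink (ev R) x = 0),
         (fun x => inH4 x /\ mink (mv R) x = 0 /\ mink (ev R) x = 0),
         (fun x => inH4 x /\ mink (pv R) x = 0 /\ mink (qv R) x = 0),
         (refl (nv R) *m refl (ev R)), (refl (mv R) *m refl (ev R)),
         (refl (pv R) *m refl (qv R)).
  split; [|split; [|split; [|split; [|split; [|split; [|split]]]]]].
  + apply: (plane_ok (p := pa R)); rewrite ?m_nn ?m_ee ?m_ne ?m_na ?m_ea ?oner_eq0 //; exact: H4a.
  + apply: (plane_ok (p := pb R)); rewrite ?m_mm ?m_ee ?m_me ?m_mb ?m_eb ?oner_eq0 //; exact: H4b.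
  + apply: (plane_ok (p := pa R)); rewrite ?m_pp ?m_qq ?m_pq ?m_pa ?m_qa ?pnatr_eq0 //; exact: H4a.
  + exists (nv R), (ev R); rewrite m_nn m_ee m_ne ltr01; by do 4 split.
  + exists (mv R), (ev R); rewrite m_mm m_ee m_me ltr01; by do 4 split.
  + exists (pv R), (qv R); rewrite m_pp m_qq m_pq ltr0n; by do 4 split.
  + exact: eA.
  + exact: eB.
- apply: (@no_inv R (Am R) (Bm R) (u0 R) (v0 R) (Gm R) (Nm R) (K4 R) (K16 R) 4 16).
  + by rewrite p_A2 idE p_P.
  + case=> [[|[|[|[|[|i]]]]] Hi]; last (by exfalso; move: Hi; rewrite !ltnS);
      rewrite /= ?exprS ?expr0 ?mulr1 -?mulmxE -?mulmxA ?mul1mx ?bu0 ?bu1 ?bu2 ?bu3;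
      apply/rowP => j; rewrite !mxE /=; reflexivity.
  + case=> [[|[|[|[|[|i]]]]] Hi]; last (by exfalso; move: Hi; rewrite !ltnS);
      rewrite /= ?exprSr ?expr0 ?mul1r -?mulmxE ?mulmxA ?mulmx1 ?vb0 ?vb1 ?vb2 ?vb3;
      apply/rowP => j; rewrite !mxE /=; reflexivity.
  + by rewrite p_KG I4E.
  + by rewrite pnatr_eq0.
  + by rewrite p_KN I16E.
  + by rewrite pnatr_eq0.
Qed.
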